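(* Let $k \geq 2$ and $n \geq 1$ be integers and $\Sigma_k = \{0,\ldots,k-1\}$. Suppose $w$ is a word over $\Sigma_k$ that contains every square in $\Sigma_k^{2n}$ as a factor. Then $|w| \geq k^n + n\,C(n,k) \geq 2k^n$.
   Context: A word is a square if it equals $xx$ for some word $x$; the squares in $\Sigma_k^{2n}$ are exactly the words $xx$ with $x \in \Sigma_k^n$. Two words $u,v \in \Sigma_k^n$ are conjugate if $u = ab$ and $v = ba$ for some words $a,b$. $C(n,k)$ denotes the number of conjugacy classes in $\Sigma_k^n$, i.e. $C(n,k) = \sum_{d \mid n} \frac{\phi(d)}{n} k^{n/d}$ with $\phi$ Euler's totient function. A factor of a word is a contiguous block of consecutive symbols. *)

(* Defs.v *)
From mathcomp Require Import all_boot.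
Set Implicit Arguments. Unset Strict Implicit. Unset Printing Implicit Defensive.

Definition is_factor (T : eqType) (u w : seq T) : bool := infix u w.

(* C(n,k) = sum_{d | n} phi(d)/n * k^(n/d), the number of conjugacy classes
   of words of length n over a k-letter alphabet (the sum is an integer;
   we compute (sum_{d|n} phi(d) k^(n/d)) / n, which is exact). *)
Definition C (n k : nat) : nat :=
  (\sum_(d <- divisors n) totient d * k ^ (n %/ d)) %/ n.

(* Main.v *)
Require Import Defs.
From mathcomp Require Import all_boot all_fingroup zify zmodp.
Set Implicit Arguments. Unset Strict Implicit. Unset Printing Implicit Defensive.

Lemma nth_rot (A : Type) (x0 : A) (s : seq A) j i :
  j <= size s -> i < size s -> nth x0 (rot j s) i = nth x0 s ((i + j) %% size s).
Proof.
move=> js isz; rewrite /rot nth_cat size_drop.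
case: ltnP => h.
  by rewrite nth_drop modn_small 1?addnC //; lia.
rewrite nth_take; last by lia.
have -> : i + j = (i - (size s - j)) + size s by lia.
by rewrite modnDr modn_small //; lia.
Qed.

Lemma periodic_mod (A : Type) (f : nat -> A) n j : 0 < n ->
  (forall i, i < n -> f ((i + j) %% n) = f i) ->
  forall i, i < n -> f i = f (i %% gcdn j n).
Proof.
move=> n0 P.
have step : forall a i, i < n -> f ((i + a * j) %% n) = f i.
  elim=> [|a IH] i ilt; first by rewrite mul0n addn0 modn_small.
  have -> : (i + a.+1 * j) %% n = ((i + a * j) %% n + j) %% n.
    by rewrite modnDml mulSn; congr (_ %% _); lia.
  by rewrite P ?ltn_pmod // IH.
have [a _ na] := Bezoutl j n0.
set g := gcdn j n.
have g0 : 0 < g by rewrite gcdn_gt0 n0 orbT.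
have back : forall i, g <= i -> i < n -> f i = f (i - g).
  move=> i gi ilt; rewrite -(step a i ilt).
  have -> : i + a * j = (i - g) + (gcdn n j + a * j) by rewrite gcdnC /g; lia.
  rewrite -modnDmr (eqP na) addn0 modn_small //; lia.
elim/ltn_ind=> i IH ilt.
case: (ltnP i g) => ig; first by rewrite modn_small.
rewrite back // IH; [|lia|lia].
by rewrite -{2}(subnK ig) modnDr.
Qed.

Lemma card_gcd_eq n d : 0 < n -> d %| n ->
  #|[set j : 'I_n | gcdn j n == n %/ d]| = totient d.
Proof.
move=> n0 dn.
have d0 : 0 < d by case: d dn => //; rewrite dvd0n => /eqP ?; subst n.
set e := n %/ d.
have ne : n = d * e by rewrite /e mulnC divnK.
have e0 : 0 < e by move: n0; rewrite ne muln_gt0 => /andP[].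
have hlt (i : 'I_d) : i * e < n by rewrite ne ltn_pmul2r.
pose h (i : 'I_d) : 'I_n := Ordinal (hlt i).
have -> : [set j : 'I_n | gcdn j n == e] = h @: [set i : 'I_d | coprime d i].
  apply/setP => j; rewrite !inE; apply/idP/imsetP.
  - move=> /eqP gj.
    have ej : e %| j by rewrite -gj dvdn_gcdl.
    have ltj : j %/ e < d by rewrite ltn_divLR // -ne.
    exists (Ordinal ltj); last by apply: val_inj; rewrite /= divnK.
    rewrite inE /= /coprime.
    have gj' : gcdn (j %/ e * e) (d * e) = e by rewrite divnK // -ne.
    move: gj'; rewrite -muln_gcdl gcdnC.
    by rewrite -[X in _ = X -> _]mul1n => /eqP; rewrite eqn_pmul2r.
  - case=> i; rewrite inE => ci ->; rewrite /= ne -muln_gcdl gcdnC.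
    by rewrite (eqP ci) mul1n.
rewrite card_in_imset; last first.
  by move=> a b _ _ /(congr1 val) /= /eqP; rewrite eqn_pmul2r // => /eqP /val_inj.
rewrite -sum1dep_card totient_count_coprime big_mkord big_mkcond /=.
by apply: eq_bigr => i _; case: coprime.
Qed.

Lemma sum_gcd n (f : nat -> nat) : 0 < n ->
  \sum_(j < n) f (gcdn j n) = \sum_(d <- divisors n) totient d * f (n %/ d).
Proof.
move=> n0.
have inner (j : 'I_n) : f (gcdn j n) =
   \sum_(d <- divisors n) (if gcdn j n == n %/ d then f (n %/ d) else 0).
  have g0 : 0 < gcdn j n by rewrite gcdn_gt0 n0 orbT.
  have gd : gcdn j n %| n by apply: dvdn_gcdr.
  set d0 := n %/ gcdn j n.
  have nd0 : n = d0 * gcdn j n by rewrite divnK.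
  have d0in : d0 \in divisors n by rewrite -dvdn_divisors // nd0 dvdn_mulr.
  rewrite (bigD1_seq d0) //= ?divisors_uniq //.
  have -> : n %/ d0 = gcdn j n.
    by rewrite {1}nd0 mulKn // /d0 divn_gt0 // dvdn_leq.
  rewrite eqxx big1_seq ?addn0 // => d /andP[dd0 dn].
  case: eqP => // ge.
  move: dn; rewrite -dvdn_divisors // => dn.
  have dpos : 0 < d by apply: dvdn_gt0 n0 dn.
  move: dn => /dvdnP[q nq].
  have : n %/ d = q by rewrite nq mulnK.
  move=> nq'; rewrite nq' in ge.
  by exfalso; move: dd0; rewrite /d0 ge nq mulKn ?eqxx // -ge.
rewrite (eq_bigr _ (fun j _ => inner j)).
rewrite exchange_big /=; apply: eq_big_seq => d; rewrite -dvdn_divisors // => dn.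
rewrite -big_mkcond /= sum_nat_cond_const card_gcd_eq //.
Qed.

Definition rotT k n (t : n.-tuple 'I_k) (j : 'I_n) : n.-tuple 'I_k := [tuple of rot j t].

Lemma rotT1 k n' : (@rotT k n'.+1)^~ 1%g =1 id.
Proof. by move=> t; apply: val_inj; rewrite /= rot0. Qed.

Lemma rotTM k n' t : act_morph (@rotT k n'.+1) t.
Proof.
move=> a b; apply: val_inj => /=.
rewrite rot_add_mod ?size_tuple; [|exact: ltnW|exact: ltnW].
case: leqP => h.
  case: (ltnP (b + a) n'.+1) => h2; first by rewrite modn_small // addnC.
  have -> : a + b = n'.+1 by lia.
  by rewrite modnn rot0 rot_oversize // size_tuple.
have -> : a + b = (b + a - n'.+1) + n'.+1 by lia.
move: (ltn_ord a) (ltn_ord b) => ha hb.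
by rewrite modnDr modn_small //; lia.
Qed.

Definition rotA k n' := TotalAction (@rotT1 k n') (@rotTM k n').

Lemma card_fix k n' (j : 'I_n'.+1) :
  #|('Fix_([set: (n'.+1).-tuple 'I_k] | rotA k n')[j])%g| = k ^ gcdn j n'.+1.
Proof.
set n := n'.+1; set g := gcdn j n.
have n0 : 0 < n by [].
have g0 : 0 < g by rewrite gcdn_gt0 n0 orbT.
have gn : g %| n by apply: dvdn_gcdr.
have gj : g %| j by apply: dvdn_gcdl.
have gle : g <= n by apply: dvdn_leq.
pose build (u : g.-tuple 'I_k) : n.-tuple 'I_k :=
  [tuple tnth u (Ordinal (ltn_pmod i g0)) | i < n].
have nth_build x0 u m (mlt : m < n) :
    nth x0 (build u) m = tnth u (Ordinal (ltn_pmod m g0)).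
  by rewrite -(tnth_nth x0 (build u) (Ordinal mlt)) tnth_mktuple.
have -> : ('Fix_([set: n.-tuple 'I_k] | rotA k n')[j])%g = build @: setT.
  apply/setP => t; rewrite !inE /= sub1set inE; apply/idP/imsetP.
  - move=> /eqP /(congr1 val) /= fixt.
    pose x0 := thead t.
    have per := @periodic_mod _ (fun i => nth x0 t i) n j n0.
    have per' : forall i, i < n -> nth x0 t i = nth x0 t (i %% g).
      apply: per => i ilt.
      by rewrite -{2}fixt nth_rot ?size_tuple // ltnW.
    exists [tuple tnth t (widen_ord gle i) | i < g]; first by [].
    apply: eq_from_tnth => i.
    rewrite tnth_mktuple tnth_mktuple (tnth_nth x0) (tnth_nth x0) /=.
    exact: per'.
  - case=> u _ ->; apply/eqP; apply: val_inj => /=.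
    apply: (@eq_from_nth _ (thead (build u))); first by rewrite size_rot.
    move=> i; rewrite size_rot size_tuple card_ord => ilt.
    rewrite nth_rot ?size_tuple ?card_ord ?(ltnW (ltn_ord j)) //.
    rewrite !nth_build ?ltn_pmod //; apply: congr1; apply: val_inj => /=.
    by rewrite modn_dvdm // -modnDmr (eqP gj) addn0.
rewrite card_imset; first by rewrite cardsT card_tuple card_ord.
move=> u v eq_uv; apply: eq_from_tnth => i.
have ilt : i < n by apply: leq_trans (ltn_ord i) gle.
have := congr1 (fun t : n.-tuple 'I_k => tnth t (Ordinal ilt)) eq_uv.
rewrite /= !tnth_mktuple.
set o := Ordinal _; have -> : o = i by apply: val_inj; rewrite /= modn_small.
by [].
Qed.

Lemma classes_count k n' :
  #|orbit (rotA k n') [set: 'I_n'.+1]%G @: [set: (n'.+1).-tuple 'I_k]| * n'.+1 =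
  \sum_(d <- divisors n'.+1) totient d * k ^ (n'.+1 %/ d).
Proof.
have acts : [acts [set: 'I_n'.+1]%G, on [set: (n'.+1).-tuple 'I_k] | rotA k n'].
  by apply/actsP => a _ x; rewrite !inE.
have := Frobenius_Cauchy acts; rewrite cardsT card_ord => <-.
rewrite -sum_gcd //; rewrite (eq_bigr _ (fun j _ => card_fix k j)).
by rewrite [LHS]big_mkcond /=; apply: eq_bigr => i _; rewrite inE.
Qed.

Lemma main_bound k n' (w : seq 'I_k) : 0 < k ->
  (forall x : seq 'I_k, size x = n'.+1 -> infix (x ++ x) w) ->
  k ^ n'.+1 + n'.+1 * #|orbit (rotA k n') [set: 'I_n'.+1]%G @: [set: (n'.+1).-tuple 'I_k]|
   + n' <= size w.
Proof.
move=> k0 H.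
set n := n'.+1.
set G := [set: 'I_n]%G.
set to := rotA k n'.
pose pos (x : n.-tuple 'I_k) := infix_index (x ++ x) w.
have occ x : take (n + n) (drop (pos x) w) = x ++ x.
  have := H x (size_tuple x); rewrite infixE size_cat size_tuple => /eqP.
  by [].
have posle x : pos x + (n + n) <= size w.
  have := congr1 size (occ x); rewrite size_take_min size_drop size_cat size_tuple.
  lia.
have win x : take n (drop (pos x) w) = x.
  by rewrite -(take_takel _ (leq_addr n n)) occ take_size_cat // size_tuple.
have pos_inj : injective pos.
  by move=> x y e; apply: val_inj => /=; rewrite -(win x) -(win y) e.
have shift x y : pos x < pos y <= pos x + n -> y \in orbit to G x.
  move=> /andP[lt le].
  set d := pos y - pos x.
  have d0 : 0 < d by rewrite subn_gt0.
  have dn : d <= n by rewrite leq_subLR.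
  have ey : tval y = rot d x.
    rewrite -(win y).
    have -> : pos y = d + pos x by rewrite subnK // ltnW.
    rewrite -drop_drop -(cat_take_drop (n + n) (drop (pos x) w)) occ.
    rewrite -catA drop_cat size_tuple.
    case: ltnP => dlt.
      rewrite take_cat size_drop size_tuple ltnNge leq_subr /=.
      rewrite takel_cat ?size_tuple; last by lia.
      by rewrite /rot; congr (_ ++ take _ _); lia.
    have -> : d = n by lia.
    by rewrite subnn drop0 take_size_cat ?size_tuple // rot_oversize ?size_tuple.
  have -> : y = to x (inZp d).
    apply: val_inj; rewrite /= ey.
    case: (ltnP d n) => dlt; first by rewrite modn_small.
    have -> : d = n by lia.
    by rewrite modnn rot0 rot_oversize ?size_tuple.
  by apply: mem_orbit; rewrite inE.
set classes := orbit to G @: [set: n.-tuple 'I_k].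
set N := (size w - (n + n)).+1.
have posN x : pos x < N by have := posle x; rewrite /N; lia.
pose posO x : 'I_N := inord (pos x).
have posOE x : nat_of_ord (posO x) = pos x by rewrite /posO inordK // posN.
set Q := [set posO x | x : n.-tuple 'I_k].
have cardQ : #|Q| = k ^ n.
  rewrite card_imset ?cardsT ?card_tuple ?card_ord //.
  by move=> x y /(congr1 (@nat_of_ord N)); rewrite !posOE => /pos_inj.
set F := [set x : n.-tuple 'I_k |
           [forall y : n.-tuple 'I_k, ~~ ((pos y < pos x) && (pos x <= pos y + n))]].
have inF x y : x \in F -> pos y < pos x -> pos y + n < pos x.
  rewrite inE => /forallP /(_ y) Hf lt; move: Hf; rewrite lt /=.
  by rewrite -ltnNge.
pose xa := [tuple Ordinal k0 | i < n].
have clF : #|classes| <= #|F|.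
  apply: (@leq_trans #|orbit to G @: F|); last exact: leq_imset_card.
  apply: subset_leq_card; apply/subsetP => c /imsetP [x _ ->].
  have xo : x \in orbit to G x by apply: orbit_refl.
  case: (arg_minnP pos xo) => y yo ymin.
  apply/imsetP; exists y.
    rewrite inE; apply/forallP => z; apply/negP => /andP[zy yz].
    have : y \in orbit to G z by apply: shift; rewrite zy yz.
    rewrite orbit_sym => zo.
    have := ymin z (orbit_trans zo yo).
    by rewrite leqNgt zy.
  by symmetry; apply/orbit_eqP.
case: (@arg_minnP _ xa xpredT pos isT) => x0 _ x0min.
set F' := F :\ x0.
have bigp x : x \in F' -> pos x0 + n < pos x.
  rewrite in_setD1 => /andP[xx0 xF]; apply: inF => //.
  rewrite ltn_neqAle x0min // andbT; apply/negP => /eqP /pos_inj e.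
  by rewrite e eqxx in xx0.
pose h (p : n.-tuple 'I_k * 'I_n) : 'I_N := inord (pos p.1 - p.2.+1).
have hval p : p.1 \in F' -> nat_of_ord (h p) = pos p.1 - p.2.+1.
  move=> /bigp bp; rewrite /h inordK //; exact: leq_ltn_trans (leq_subr _ _) (posN p.1).
have F'F z : z \in F' -> z \in F by rewrite in_setD1 => /andP[].
have hinj : {in setX F' [set: 'I_n] &, injective h}.
  move=> [x d] [y e]; rewrite !in_setX /= !in_setT !andbT => xF yF.
  move=> /(congr1 (@nat_of_ord N)); rewrite !hval //= => eq.
  have := bigp _ xF; have := bigp _ yF; have := ltn_ord d; have := ltn_ord e.
  move=> ltd lte bpy bpx.
  case: (ltngtP (pos x) (pos y)) => c.
  - by have := inF y x (F'F _ yF) c; lia.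
  - by have := inF x y (F'F _ xF) c; lia.
  - have exy := pos_inj _ _ c; subst y.
    by congr pair; apply: val_inj => /=; lia.
have hQ : h @: setX F' [set: 'I_n] \subset ~: Q.
  apply/subsetP => _ /imsetP [[x d] pin ->].
  move: pin; rewrite in_setX /= in_setT andbT => xF.
  rewrite in_setC; apply/imsetP => [[y _ /(congr1 (@nat_of_ord N))]].
  rewrite hval //= posOE => ey.
  have := bigp _ xF; have := ltn_ord d => ltd bp.
  have : pos y < pos x by lia.
  by move=> /(inF x y (F'F _ xF)); lia.
have c1 : #|Q| + #|~: Q| = N by rewrite cardsC card_ord.
have c2 : #|F'| * n <= #|~: Q|.
  have := subset_leq_card hQ; rewrite (card_in_imset hinj) cardsX cardsT card_ord.
  by [].
have c3 : #|F| <= 1 + #|F'| by rewrite (cardsD1 x0 F); case: (x0 \in F).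
have c4 : #|classes| * n <= (1 + #|F'|) * n by rewrite leq_mul2r (leq_trans clF c3) orbT.
have nw := posle xa.
move: c4; rewrite mulnDl mul1n [n * _]mulnC => c4.
move: c1; rewrite cardQ /N => c1.
have nn : n = n'.+1 by [].
have c5 : #|classes| * n <= n + #|~: Q| by apply: leq_trans c4 _; rewrite leq_add2l.
apply: (@leq_trans (k ^ n + (n + #|~: Q|) + n')); first by rewrite leq_add2r leq_add2l.
have -> : k ^ n + (n + #|~: Q|) + n' = (k ^ n + #|~: Q|) + (n + n') by lia.
rewrite c1; move: nw; clear; rewrite /n; lia.
Qed.

Theorem proposition5 (k n : nat) (w : seq 'I_k) :
  2 <= k -> 1 <= n ->
  (forall x : seq 'I_k, size x = n -> is_factor (x ++ x) w) ->
  k ^ n + n * C n k <= size w /\ 2 * k ^ n <= k ^ n + n * C n k.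
Proof.
case: n => [|n'] //; move=> k2 _ H.
have k0 : 0 < k by apply: leq_trans k2.
have Cm : C n'.+1 k =
    #|orbit (rotA k n') [set: 'I_n'.+1]%G @: [set: (n'.+1).-tuple 'I_k]|.
  by rewrite /C -classes_count mulnK.
split.
  rewrite Cm; apply: leq_trans (main_bound k0 H); exact: leq_addr.
rewrite mul2n -addnn leq_add2l Cm mulnC classes_count.
rewrite (bigD1_seq 1) ?divisor1 ?divisors_uniq //= divn1.
have -> : totient 1 = 1 by [].
by rewrite mul1n leq_addr.
Qed.
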